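(* Let $\varphi\colon\mathbb{R}_+\to\mathbb{R}_+$ be a continuous, sublinear and increasing function. Let $\ell\ge1$ be an integer, $(X,\mu)$ a probability space, and $f_1,\dots,f_\ell\colon X\to\mathbb{N}$ measurable maps with $\int_X\varphi(f_i(x))\,d\mu(x)<+\infty$ for every $i\in\{1,\dots,\ell\}$. Then there exists a subadditive map $\psi\colon\mathbb{R}_+\to\mathbb{R}_+$ with $\psi(0)=0$ such that $\psi$ and $t\mapsto t/\psi(t)$ are non-decreasing, and (1) $\varphi(x_k)=o(\psi(x_k))$ as $k\to\infty$ for some increasing sequence $(x_k)_{k\ge0}$ of non-negative real numbers tending to $+\infty$; (2) $\int_X\psi(f_i(x))\,d\mu(x)<+\infty$ for every $i\in\{1,\dots,\ell\}$.
   Context: A function $\varphi$ is sublinear if $\varphi(t)=o(t)$ as $t\to+\infty$. *)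

(* Defs.v *)
From HB Require Import structures.
From mathcomp Require Import all_boot all_order all_algebra.
From mathcomp Require Import all_classical all_reals all_analysis.
Set Implicit Arguments. Unset Strict Implicit. Unset Printing Implicit Defensive.
Import Order.TTheory GRing.Theory Num.Theory.
Import numFieldNormedType.Exports.
Local Open Scope classical_set_scope.
Local Open Scope ring_scope.

Definition littleo_along {T : Type} {R : realType} (F : set_system T)
  (f g : T -> R) : Prop :=
  forall e : R, 0 < e -> \forall x \near F, `|f x| <= e * `|g x|.

Definition sublinear {R : realType} (phi : R -> R) : Prop :=
  littleo_along (+oo%R : set_system R) phi id.

Definition subadditive_nonneg {R : realType} (psi : R -> R) : Prop :=
  forall s t : R, 0 <= s -> 0 <= t -> psi (s + t) <= psi s + psi t.

(* Main.v *)
Require Import Defs.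
From HB Require Import structures.
From mathcomp Require Import all_boot all_order all_algebra.
From mathcomp Require Import all_classical all_reals all_analysis.
From mathcomp Require Import measurable_realfun.
Import Order.TTheory GRing.Theory Num.Theory.
Import numFieldNormedType.Exports.
Local Open Scope classical_set_scope.
Local Open Scope ring_scope.
From mathcomp Require Import lra.
Set Implicit Arguments. Unset Strict Implicit.
Lemma argmin_nat (R : realType) (g : nat -> R) (M : nat) : (1 <= M)%N ->
  exists Q, [/\ (1 <= Q)%N, (Q <= M)%N & forall n, (1 <= n)%N -> (n <= M)%N -> g Q <= g n].
Proof.
elim: M => // M IH _.
have [M0|Mpos] := posnP M.
  subst M; exists 1%N; split => // n n1 n2.
  by have -> : n = 1%N by apply/eqP; rewrite eqn_leq n1 n2.
have [Q [Q1 QM HQ]] := IH Mpos.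
have [le|lt] := leP (g Q) (g M.+1).
  exists Q; split => //; first by apply: leqW.
  move=> n n1; rewrite leq_eqVlt => /orP[/eqP->//|]; rewrite ltnS; exact: HQ.
exists M.+1; split => // n n1; rewrite leq_eqVlt => /orP[/eqP->//|].
rewrite ltnS => nM; apply: le_trans (ltW lt) _; exact: HQ.
Qed.
Lemma phi_le (R : realType) (phi : R -> R)
  (phi_incr : {in `[0, +oo[ &, forall s t : R, s < t -> phi s < phi t}) s t :
  0 <= s -> s <= t -> phi s <= phi t.
Proof.
move=> s0 st; rewrite le_eqVlt in st; case/orP: st => [/eqP->//|st].
apply/ltW/phi_incr => //; rewrite in_itv /= andbT //.
exact: le_trans (ltW st).
Qed.

Lemma phi_pos (R : realType) (phi : R -> R)
  (phi_nonneg : forall t : R, 0 <= t -> 0 <= phi t)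
  (phi_incr : {in `[0, +oo[ &, forall s t : R, s < t -> phi s < phi t}) t :
  0 < t -> 0 < phi t.
Proof.
move=> t0; apply: le_lt_trans (phi_nonneg 0 (lexx _)) _.
by apply: phi_incr => //; rewrite in_itv /= andbT // ltW.
Qed.

Definition ratio {R : realType} (phi : R -> R) (n : nat) : R := phi n%:R / n%:R.

Lemma ratio_pos (R : realType) (phi : R -> R)
  (phi_nonneg : forall t : R, 0 <= t -> 0 <= phi t)
  (phi_incr : {in `[0, +oo[ &, forall s t : R, s < t -> phi s < phi t}) n :
  (1 <= n)%N -> 0 < ratio phi n.
Proof.
move=> n1; have n0 : (0 < n%:R :> R) by rewrite ltr0n.
by rewrite /ratio divr_gt0 // (phi_pos phi_nonneg phi_incr n0).
Qed.

Lemma pickN (R : realType) (phi : R -> R)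
  (phi_nonneg : forall t : R, 0 <= t -> 0 <= phi t)
  (phi_sublin : sublinear phi)
  (phi_incr : {in `[0, +oo[ &, forall s t : R, s < t -> phi s < phi t})
  (delta : R) (P : nat) : 0 < delta ->
  exists N, [/\ (P < N)%N, ratio phi N <= delta &
     forall n, (1 <= n)%N -> (n <= N)%N -> ratio phi N <= ratio phi n].
Proof.
move=> d0.
have [Q0 [Q01 Q0P HQ0]] := @argmin_nat R (ratio phi) P.+1 isT.
have rQ0 := ratio_pos phi_nonneg phi_incr Q01.
pose d' := Num.min delta (ratio phi Q0) / 2.
have d'0 : 0 < d' by rewrite /d' divr_gt0 // lt_min d0 rQ0.
have H1 := phi_sublin d' d'0.
have H2 : \forall n \near \oo, `|phi n%:R| <= d' * `|(n%:R : R)|.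
  exact: (cvgr_idn H1).
have [M [HM MP]] := filter_ex (filterI H2 (nbhs_infty_ge P.+2)).
have M1 : (1 <= M)%N by apply: leq_trans MP.
have M0 : (0 < M%:R :> R) by rewrite ltr0n.
have rM : ratio phi M <= d'.
  rewrite /ratio ler_pdivrMr //.
  move: HM; rewrite ger0_norm ?ger0_norm //; last exact: phi_nonneg (ltW M0).
  idtac.
have d'lt : d' < Num.min delta (ratio phi Q0).
  rewrite /d' ltr_pdivrMr // ltr_pMr //; last by rewrite lt_min d0 rQ0.
  by rewrite ltr1n.
have [Q [Q1 QM HQ]] := @argmin_nat R (ratio phi) M M1.
have rQ : ratio phi Q < Num.min delta (ratio phi Q0).
  by apply: le_lt_trans d'lt; apply: le_trans rM; exact: HQ.
exists Q; split.
- rewrite ltnNge; apply/negP => QP.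
  have := HQ0 Q Q1 (leq_trans QP (leqnSn _)).
  move: rQ; rewrite lt_min => /andP[_ h1] h2.
  by have := lt_le_trans h1 h2; rewrite ltxx.
- by move: rQ; rewrite lt_min => /andP[/ltW].
- move=> n n1 nQ; apply: HQ => //; exact: leq_trans QM.
Qed.
Lemma natfun_measR (R : realType) (g : nat -> R) : measurable_fun (setT : set nat) g.
Proof. by move=> _ Y mY; exact: I. Qed.

Lemma measEcomp (R : realType) d (X : measurableType d) (f : X -> nat)
  (mf : measurable_fun setT f) (h : nat -> R) :
  measurable_fun setT (fun x => (h (f x))%:E).
Proof. apply/measurable_EFinP; exact: (measurableT_comp (natfun_measR h) mf). Qed.

Lemma tails (R : realType) (phi : R -> R)
  (phi_nonneg : forall t : R, 0 <= t -> 0 <= phi t)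
  (l : nat) (d : measure_display) (X : measurableType d) (mu : probability X R)
  (f : 'I_l -> X -> nat)
  (f_meas : forall i : 'I_l, measurable_fun setT (f i))
  (f_int : forall i : 'I_l, (\int[mu]_x (phi (f i x)%:R)%:E < +oo)%E)
  (eps : R) : 0 < eps -> exists2 eta, 0 < eta & forall r, 0 <= r -> r <= eta ->
    forall i, (\int[mu]_x (Num.min ((f i x)%:R * r) (phi (f i x)%:R))%:E <= eps%:E)%E.
Proof.
move=> e0.
have H i : \forall j \near \oo,
   (\int[mu]_x (Num.min ((f i x)%:R * j.+1%:R^-1) (phi (f i x)%:R))%:E <= eps%:E)%E.
  pose g_ (j : nat) x := (Num.min ((f i x)%:R * j.+1%:R^-1) (phi (f i x)%:R))%:E.
  have Hc : (\int[mu]_x g_ j x)%E @[j --> \oo] --> (\int[mu]_x (fun=> 0%E) x)%E.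
    apply: (@dominated_cvg d X R mu setT measurableT g_ (fun=> 0%E)
       (fun x => (phi (f i x)%:R)%:E)).
    - move=> j; exact: (measEcomp (f_meas i) (fun n => Num.min (n%:R * j.+1%:R^-1) (phi n%:R))).
    - move=> x _ /=; apply: (proj2 (fine_cvgP _ 0)); split; first exact: nearW.
      apply: (@squeeze_cvgr _ _ _ _ (fun=> 0) (fun j => (f i x)%:R * j.+1%:R^-1)).
      + apply: nearW => j /=; rewrite ge_min lexx /= le_min.
        by rewrite mulr_ge0 // phi_nonneg.
      + exact: cvg_cst.
      + rewrite -[X in _ --> X](mulr0 ((f i x)%:R : R)).
        exact: (cvgMr (@cvg_harmonic R)).
    - by [].
    - apply/integrableP; split; first exact: (measEcomp (f_meas i) (fun n => phi n%:R)).
      under eq_integral do rewrite gee0_abs ?lee_fin ?phi_nonneg //.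
      exact: f_int i.
    - move=> j x _; rewrite gee0_abs ?lee_fin.
        by rewrite ge_min lexx orbT.
      by rewrite le_min mulr_ge0 // phi_nonneg.
  move: Hc; rewrite integral0 => /fine_cvgP[Hfin Hcv].
  have := cvgr_lt 0 Hcv _ e0.
  move=> Hl; near=> j.
  have Hf : (\int[mu]_x g_ j x)%E \is a fin_num by near: j; exact: Hfin.
  have Hlt : fine (\int[mu]_x g_ j x)%E < eps by near: j; exact: Hl.
  by rewrite -(fineK Hf) lee_fin ltW.
have [J HJ] := filter_ex (filter_forall _ H).
exists J.+1%:R^-1; first by rewrite invr_gt0 ltr0n.
move=> r r0 rJ i; apply: le_trans (HJ i).
apply: ge0_le_integral => //.
- by move=> x _; rewrite lee_fin le_min mulr_ge0 // phi_nonneg.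
- exact: (measEcomp (f_meas i) (fun n => Num.min (n%:R * r) (phi n%:R))).
- exact: (measEcomp (f_meas i) (fun n => Num.min (n%:R * J.+1%:R^-1) (phi n%:R))).
- move=> x _; rewrite lee_fin le_min; apply/andP; split.
    by rewrite ge_min; apply/orP; left; rewrite ler_wpM2l.
  by rewrite ge_min lexx orbT.
Unshelve. all: by end_near.
Qed.
Local Open Scope ereal_scope.
Lemma term_le (R : realType) (v : nat -> \bar R) k : (forall n, 0 <= v n) -> v k <= \sum_(n <oo) v n.
Proof. move=> v0; rewrite (nneseriesD1 (n:=k)) //; rewrite leeDl //; exact: nneseries_ge0. Qed.
Local Close Scope ereal_scope.
Lemma min_subadd (R : realType) (s t N : R) : 0 <= s -> 0 <= t -> 0 <= N ->
  Num.min (s + t) N <= Num.min s N + Num.min t N.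
Proof.
move=> s0 t0 N0.
have [sN|Ns] := leP s N; have [tN|Nt] := leP t N; rewrite ge_min; apply/orP.
- by left.
- right; lra.
- right; lra.
- right; lra.
Qed.
Lemma min_mono (R : realType) (s t N : R) : s <= t -> Num.min s N <= Num.min t N.
Proof.
move=> st; rewrite le_min !ge_min lexx orbT andbT st //.
Qed.
Lemma min_ratio (R : realType) (s t N : R) : 0 < s -> s <= t -> 0 <= N ->
  s * Num.min t N <= t * Num.min s N.
Proof.
move=> s0 st N0.
have [tN|Nt] := leP t N.
  have sN : s <= N by apply: le_trans st tN.
  rewrite (min_l sN); lra.
have [sN|Ns] := leP s N; nra.
Qed.
Lemma min_ge0 (R : realType) (a b : R) : 0 <= a -> 0 <= b -> 0 <= Num.min a b.
Proof. by move=> a0 b0; have [] := leP a b. Qed.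
Lemma min_lel (R : realType) (a b : R) : Num.min a b <= a.
Proof. by have [//|/ltW] := leP a b. Qed.
Lemma min_ler (R : realType) (a b : R) : Num.min a b <= b.
Proof. by have [//|/ltW] := leP a b. Qed.
Lemma nat_ev (R : realType) (A : R) : exists K, forall k, (K <= k)%N -> A <= k%:R.
Proof. have [K _ HK] := (cvgryPge _).1 (@cvgr_idn R) A. by exists K => k /HK. Qed.
Lemma ev_nat (P : nat -> Prop) K : (forall k, (K <= k)%N -> P k) -> \forall k \near \oo, P k.
Proof. by move=> HK; exists K. Qed.
Fixpoint recN (g : nat -> nat -> nat) (k : nat) : nat :=
  match k with 0 => g 0%N 0%N | k'.+1 => g k (recN g k') end.
Unset Implicit Arguments.

Theorem lemma3p2 (R : realType) (phi : R -> R)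
  (phi_nonneg : forall t : R, 0 <= t -> 0 <= phi t)
  (phi_cont : {within `[0, +oo[, continuous phi})
  (phi_sublin : sublinear phi)
  (phi_incr : {in `[0, +oo[ &, forall s t : R, s < t -> phi s < phi t})
  (l : nat) (hl : (1 <= l)%N)
  (d : measure_display) (X : measurableType d) (mu : probability X R)
  (f : 'I_l -> X -> nat)
  (f_meas : forall i : 'I_l, measurable_fun setT (f i))
  (f_int : forall i : 'I_l, (\int[mu]_x (phi (f i x)%:R)%:E < +oo)%E) :
  exists psi : R -> R,
    (forall t : R, 0 <= t -> 0 <= psi t) /\
    psi 0 = 0 /\
    subadditive_nonneg psi /\
    {in `[0, +oo[ &, forall s t : R, s <= t -> psi s <= psi t} /\
    (forall t : R, 0 < t -> 0 < psi t) /\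
    {in `]0, +oo[ &, forall s t : R, s <= t -> s / psi s <= t / psi t} /\
    (exists x : nat -> R,
        (forall k, 0 <= x k) /\
        (forall k, x k < x k.+1) /\
        (x @ \oo --> +oo) /\
        littleo_along \oo (fun k => phi (x k)) (fun k => psi (x k))) /\
    (forall i : 'I_l, (\int[mu]_x (psi (f i x)%:R)%:E < +oo)%E).
Proof.
pose eps k : R := ((k.+1)%:R * ((2 ^ k.+1)%N)%:R)^-1.
have eps0 k : 0 < eps k by rewrite invr_gt0 mulr_gt0 // ltr0n // expn_gt0.
have epsE k : (k.+1)%:R * eps k = ((2 ^ k.+1)%N%:R)^-1.
  by rewrite /eps invfM mulrA mulfV ?mul1r // pnatr_eq0.
have : forall k, exists eta : R, 0 < eta /\ forall r, 0 <= r -> r <= eta ->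
    forall i, (\int[mu]_x (Num.min ((f i x)%:R * r) (phi (f i x)%:R))%:E <= (eps k)%:E)%E.
  move=> k; have [e e0 He] := tails phi_nonneg f_meas f_int (eps0 k).
  by exists e.
move/choice => [eta Heta].
pose delta k := Num.min (eta k) (eps k).
have delta0 k : 0 < delta k by rewrite lt_min (Heta k).1 eps0.
have : forall kP : nat * nat, exists M, [/\ (kP.2 < M)%N,
     ratio phi M <= delta kP.1 &
     forall n, (1 <= n)%N -> (n <= M)%N -> ratio phi M <= ratio phi n].
  move=> -[k P].
  exact: pickN phi_nonneg phi_sublin phi_incr (delta k) P (delta0 k).
move/choice => [pk Hpk].
pose N := recN (fun k P => pk (k, P)).
have HN k : [/\ (1 <= N k)%N, ratio phi (N k) <= delta k &
     forall n, (1 <= n)%N -> (n <= N k)%N -> ratio phi (N k) <= ratio phi n].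
  case: k => [|k] /=.
    by have [h1 h2 h3] := Hpk (0%N, 0%N); split.
  by have [h1 h2 h3] := Hpk (k.+1, N k); split => //; apply: leq_ltn_trans h1.
have Ninc k : (N k < N k.+1)%N by have [] := Hpk (k.+1, N k).
have Nge k : (k <= N k)%N.
  elim: k => // k IH; exact: leq_ltn_trans IH (Ninc k).
pose r k := ratio phi (N k).
have r0 k : 0 < r k by have [h _ _] := HN k; exact: ratio_pos phi_nonneg phi_incr _ h.
have rdelta k : r k <= delta k by have [] := HN k.
have rle k : (k.+1)%:R * r k <= ((2 ^ k.+1)%N%:R)^-1.
  rewrite -epsE ler_wpM2l //; apply: le_trans (rdelta k) _.
  by rewrite /delta ge_min lexx orbT.
pose u k t := (k.+1)%:R * r k * Num.min t (N k)%:R.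
have u0 k t : 0 <= t -> 0 <= u k t.
  move=> t0; apply: mulr_ge0; first by apply: mulr_ge0; [exact: ler0n| exact: ltW (r0 k)].
  by apply: min_ge0 => //; exact: ler0n.
pose S t := (\sum_(k <oo) (u k t)%:E)%E.
have S0 t : 0 <= t -> (0 <= S t)%E.
  by move=> t0; apply: nneseries_ge0 => k _ _; rewrite lee_fin u0.
have Sle t : 0 <= t -> (S t <= t%:E)%E.
  move=> t0; apply: le_trans (epsilon_trick0 xpredT t0).
  apply: lee_nneseries => [k _ _|k _]; first by rewrite lee_fin u0.
  rewrite lee_fin /u mulrC; apply: ler_pM => //.
  - by apply: min_ge0 => //; exact: ler0n.
  - by apply: mulr_ge0; [exact: ler0n| exact: ltW (r0 k)].
  - exact: min_lel.
have Sfin t : 0 <= t -> S t \is a fin_num.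
  move=> t0; rewrite ge0_fin_numE ?S0 //; exact: le_lt_trans (Sle t t0) (ltry _).
pose psi t := fine (S t).
have psiE t : 0 <= t -> (psi t)%:E = S t by move=> t0; rewrite fineK // Sfin.
have psi0 t : 0 <= t -> 0 <= psi t by move=> t0; rewrite -lee_fin psiE // S0.
have term k t : 0 <= t -> ((u k t)%:E <= S t)%E.
  by move=> t0; apply: (@term_le R (fun k => (u k t)%:E) k) => n; rewrite lee_fin u0.
exists psi; split; first exact: psi0.
split.
  rewrite /psi /S eseries0 // => k _ _; rewrite /u.
  by rewrite (min_l (ler0n _ _)) mulr0.
split.
  move=> s t s0 t0; rewrite -lee_fin EFinD !psiE ?addr_ge0 //.
  rewrite /S -nneseriesD; last 2 first.
  - by move=> k _ _; rewrite lee_fin u0.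
  - by move=> k _ _; rewrite lee_fin u0.
  apply: lee_nneseries => [k _ _|k _]; first by rewrite lee_fin u0 ?addr_ge0.
  rewrite -EFinD lee_fin /u -mulrDr; apply: ler_wpM2l.
    by apply: mulr_ge0; [exact: ler0n| exact: ltW (r0 k)].
  by apply: min_subadd => //; exact: ler0n.
split.
  move=> s t; rewrite !in_itv /= !andbT => s0 t0 st.
  rewrite -lee_fin !psiE //; apply: lee_nneseries => [k _ _|k _]; first by rewrite lee_fin u0.
  rewrite lee_fin /u; apply: ler_wpM2l; last exact: min_mono.
  by apply: mulr_ge0; [exact: ler0n| exact: ltW (r0 k)].
have psipos t : 0 < t -> 0 < psi t.
  move=> t0; rewrite -lte_fin (psiE _ (ltW t0)); apply: lt_le_trans (term 0%N t (ltW t0)).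
  rewrite lte_fin /u; apply: mulr_gt0; first by rewrite mulr_gt0.
  have N0 : (0 < (N 0%N)%:R :> R) by have [h _ _] := HN 0%N; rewrite ltr0n.
  by have [] := leP t (N 0%N)%:R.
split; first exact: psipos.
split.
  move=> s t; rewrite !in_itv /= !andbT => s0 t0 st.
  have key : s * psi t <= t * psi s.
    rewrite -lee_fin !EFinM (psiE _ (ltW s0)) (psiE _ (ltW t0)) /S -!nneseriesZl; last 2 first.
    - by move=> k _; rewrite lee_fin u0 // ltW.
    - by move=> k _; rewrite lee_fin u0 // ltW.
    apply: lee_nneseries => [k _ _|k _]; first by rewrite -EFinM lee_fin mulr_ge0 ?u0 // ltW.
    rewrite -!EFinM lee_fin /u mulrCA [t * _]mulrCA; apply: ler_wpM2l.
      by apply: mulr_ge0; [exact: ler0n| exact: ltW (r0 k)].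
    by apply: min_ratio => //; exact: ler0n.
  have ps := psipos s s0; have pt := psipos t t0.
  by rewrite ler_pdivlMr // mulrAC ler_pdivrMr.
have Npos k : (0 < (N k)%:R :> R) by have [h _ _] := HN k; rewrite ltr0n.
have uN k : u k (N k)%:R = (k.+1)%:R * phi (N k)%:R.
  rewrite /u (min_l (lexx _)) -mulrA; congr (_ * _).
  by rewrite /r /ratio divfK // gt_eqF.
split.
  exists (fun k => (N k)%:R); split; first by move=> k; exact: ler0n.
  split; first by move=> k; rewrite ltr_nat.
  split.
    apply/cvgryPge => A.
    have [K HK] := nat_ev A; apply: (@ev_nat (fun x => A <= (N x)%:R) K) => k /HK hk /=.
    apply: le_trans hk _; rewrite ler_nat; exact: Nge.
  move=> e e0.
  have [K HK] := nat_ev e^-1.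
  apply: (@ev_nat (fun k => `|phi (N k)%:R| <= e * `|psi (N k)%:R|) K) => k /HK Hk /=.
  have p0 := phi_nonneg _ (ltW (Npos k)).
  rewrite !ger0_norm //; last exact: psi0 (ltW (Npos k)).
  have h1 : (k.+1)%:R * phi (N k)%:R <= psi (N k)%:R.
    by rewrite -lee_fin (psiE _ (ltW (Npos k))) -uN; exact: term (ltW (Npos k)).
  have h2 : 1 <= e * (k.+1)%:R.
    have : e^-1 <= (k.+1)%:R by apply: le_trans Hk _; rewrite ler_nat.
    move/(ler_wpM2l (ltW e0)); rewrite mulfV ?gt_eqF //.
  nra.
move=> i.
have mui k : measurable_fun setT (fun x => (u k (f i x)%:R)%:E).
  exact: (measEcomp (f_meas i) (fun n => u k n%:R)).
have -> : (\int[mu]_x (psi (f i x)%:R)%:E = \int[mu]_x S (f i x)%:R)%E.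
  by apply: eq_integral => x _; rewrite psiE // ler0n.
rewrite /S (@integral_nneseries _ _ _ mu setT measurableT (fun k x => (u k (f i x)%:R)%:E)) //; last first.
  by move=> k x _; rewrite lee_fin u0 // ler0n.
apply: le_lt_trans (ltry 1%R).
apply: le_trans (epsilon_trick0 xpredT ler01).
apply: lee_nneseries => [k _ _|k _].
  by apply: integral_ge0 => x _; rewrite lee_fin u0 // ler0n.
have Hk := (Heta k).2 (r k) (ltW (r0 k)).
have rk : r k <= eta k by apply: le_trans (rdelta k) _; exact: min_lel.
apply: (@le_trans _ _ (\int[mu]_x ((k.+1)%:R%:E * (Num.min ((f i x)%:R * r k) (phi (f i x)%:R))%:E))%E).
  apply: ge0_le_integral => //.
  - by move=> x _; rewrite lee_fin u0 // ler0n.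
  - by apply: measurable_funeM; exact: (measEcomp (f_meas i) (fun n => Num.min (n%:R * r k) (phi n%:R))).
  - move=> x _; rewrite -EFinM lee_fin /u -mulrA; apply: ler_wpM2l; first exact: ler0n.
    set n := f i x.
    have [HNn _ Hrec] := HN k.
    rewrite le_min; apply/andP; split.
      by rewrite mulrC; apply: ler_wpM2r; [exact: ltW (r0 k)| exact: min_lel].
    have [nN|Nn] := leP n%:R (N k)%:R.
      case: n nN => [|n] nN.
        by rewrite mulr0 phi_nonneg.
      have := Hrec n.+1 isT; rewrite -(ler_nat R) => /(_ nN).
      rewrite /ratio ler_pdivlMr ?ltr0n //.
    rewrite /r /ratio divfK ?gt_eqF //.
    by apply: phi_le => //; exact: ltW.
rewrite ge0_integralZl_EFin //.
all: try (by move=> x _; rewrite lee_fin min_ge0 // ?phi_nonneg // ?mulr_ge0 // ?ltW).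
all: try exact: (measEcomp (f_meas i) (fun n => Num.min (n%:R * r k) (phi n%:R))).
all: try exact: ler0n.
apply: le_trans (lee_wpmul2l _ (Hk rk i)) _; first by rewrite lee_fin ler0n.
by rewrite -EFinM epsE div1r.
move=> x _; rewrite lee_fin; apply: min_ge0.
  by apply: mulr_ge0; [exact: ler0n| exact: ltW (r0 k)].
exact: phi_nonneg (ler0n _ _).
Qed.
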